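(* Let $G$ be a multiplicatively written Abelian group, $\phi$ a height on $G$, $\alpha\in G$, and $0\le a<b\le\infty$. Then $(a,b)$ is uniform if and only if every point $t\in(a,b)$ is contained in some open interval $J\subseteq(a,b)$ which is uniform.
   Context: A height on $G$ is a map $\phi:G\to[0,\infty)$ with $\phi(e)=0$ and $\phi(\beta)=\phi(\beta^{-1})$. $\mathbb R^\infty$ is the set of finitely supported real sequences, $\|\mathbf x\|_t=(\sum_n|x_n|^t)^{1/t}$. $\phi_t(\alpha)=\inf\{(\sum_{n=1}^N\phi(\alpha_n)^t)^{1/t}:N\in\mathbb N,\ \alpha_n\in G,\ \alpha=\prod_{n=1}^N\alpha_n\}$. A set $K\subseteq(0,\infty)$ is uniform if there exists $\mathbf x\in\mathbb R^\infty$ with $\phi_t(\alpha)=\|\mathbf x\|_t$ for all $t\in K$. *)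

(* Defs.v *)
From Stdlib Require Import Reals List.
Open Scope R_scope.

Record AbGroup := {
  carrier :> Type;
  gmul : carrier -> carrier -> carrier;
  ginv : carrier -> carrier;
  gone : carrier;
  gmulA : forall x y z, gmul x (gmul y z) = gmul (gmul x y) z;
  gmulC : forall x y, gmul x y = gmul y x;
  gmul1 : forall x, gmul gone x = x;
  gmulV : forall x, gmul (ginv x) x = gone
}.

Definition is_height (G : AbGroup) (phi : G -> R) : Prop :=
  phi (gone G) = 0 /\ (forall g, 0 <= phi g) /\ (forall g, phi g = phi (ginv G g)).

(* x^t for x >= 0, t > 0, with 0^t = 0 (Stdlib's Rpower 0 t is 1). *)
Definition rpow (x t : R) : R :=
  if Rlt_dec 0 x then Rpower x t else 0.

Definition gprod (G : AbGroup) (l : list G) : G :=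
  fold_right (gmul G) (gone G) l.

Definition phisum (G : AbGroup) (phi : G -> R) (t : R) (l : list G) : R :=
  rpow (fold_right Rplus 0 (map (fun g => rpow (phi g) t) l)) (/ t).

Definition phi_t_vals (G : AbGroup) (phi : G -> R) (t : R) (alpha : G) (v : R) : Prop :=
  exists l : list G, l <> nil /\ gprod G l = alpha /\ v = phisum G phi t l.

Definition is_inf (S : R -> Prop) (v : R) : Prop :=
  (forall s, S s -> v <= s) /\ (forall w, (forall s, S s -> w <= s) -> w <= v).

Definition phi_t_eq (G : AbGroup) (phi : G -> R) (t : R) (alpha : G) (v : R) : Prop :=
  is_inf (phi_t_vals G phi t alpha) v.

(* elements of R^infty are finitely supported sequences, represented by
   the finite list of their (possibly) nonzero entries *)
Definition tnorm (x : list R) (t : R) : R :=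
  rpow (fold_right Rplus 0 (map (fun r => rpow (Rabs r) t) x)) (/ t).

Definition uniform (G : AbGroup) (phi : G -> R) (alpha : G) (K : R -> Prop) : Prop :=
  exists x : list R, forall t, K t -> phi_t_eq G phi t alpha (tnorm x t).

(* extended upper endpoints: None = +infinity *)
Definition lt_ext (t : R) (b : option R) : Prop :=
  match b with Some b' => t < b' | None => True end.

Definition oint (a : R) (b : option R) : R -> Prop :=
  fun t => a < t /\ lt_ext t b.

(* Main.v *)
Require Import Defs.
From Stdlib Require Import Reals List.
From Coquelicot Require Import Coquelicot.
From Stdlib Require Import Reals Lra Lia List Classical.
Open Scope R_scope.
Open Scope R_scope.
Definition fl (l : list (R*R)) (t : R) : R :=
  fold_right (fun p acc => fst p * exp (snd p * t) + acc) 0 l.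
Definition dl (l : list (R*R)) := map (fun p => (fst p * snd p, snd p)) l.
Definition sh (m : R) (l : list (R*R)) := map (fun p => (fst p, snd p - m)) l.

Lemma fl_deriv l t : is_derive (fl l) t (fl (dl l) t).
Proof.
  induction l as [|[c m] l IH]; simpl.
  - apply (is_derive_const 0 t).
  - apply (is_derive_plus (fun t => c * exp (m * t)) (fl l)); [|exact IH].
    auto_derive; auto. ring.
Qed.

Lemma fl_sh m l t : fl l t = exp (m * t) * fl (sh m l) t.
Proof.
  induction l as [|[c k] l IH]; simpl; [ring|].
  rewrite IH. replace (k * t) with (m*t + (k-m)*t) by ring.
  rewrite exp_plus. ring.
Qed.

Lemma deriv_zero_loc (g : R -> R) u v t l :
  u < t < v -> (forall s, u < s < v -> g s = 0) -> is_derive g t l -> l = 0.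
Proof.
  intros Ht Hz Hd.
  assert (H2 : is_derive (fun _ => 0) t l).
  { apply (is_derive_ext_loc g). apply (locally_interval _ t u v).
    - simpl; lra. - simpl; lra.
    - intros y Hy1 Hy2. simpl in *. apply Hz; lra.
    - exact Hd. }
  apply is_derive_unique in H2.
  pose proof (is_derive_unique _ _ _ (is_derive_const (0:R) t)) as H3.
  rewrite H2 in H3. exact H3.
Qed.

Lemma const_of_deriv0 (g dg : R -> R) :
  (forall t, is_derive g t (dg t)) -> (forall t, dg t = 0) -> forall a b, g b = g a.
Proof.
  intros Hd H0 a b.
  destruct (MVT_cor4 g dg a (Rabs (b - a)) (fun c _ => Hd c) b (Rle_refl _))
    as [c [Hc _]].
  rewrite H0 in Hc. lra.
Qed.

Lemma fl_uniq n : forall l, (length l <= n)%nat -> forall u v, u < v ->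
  (forall t, u < t < v -> fl l t = 0) -> forall t, fl l t = 0.
Proof.
  induction n as [|n IH]; intros l Hlen u v Huv Hz t.
  - destruct l; [reflexivity| simpl in Hlen; lia].
  - destruct l as [|[c m] r]; [reflexivity|].
    simpl in Hlen.
    set (g := fl (sh m ((c,m)::r))).
    assert (Hg0 : forall s, u < s < v -> g s = 0).
    { intros s Hs. pose proof (fl_sh m ((c,m)::r) s) as E. rewrite Hz in E by exact Hs.
      unfold g. pose proof (exp_pos (m*s)). 
      apply (Rmult_eq_reg_l (exp (m*s))); lra. }
    assert (Hgd : forall s, is_derive g s (fl (dl (sh m r)) s)).
    { intros s. unfold g. pose proof (fl_deriv (sh m ((c,m)::r)) s) as D.
      assert (E : fl (dl (sh m ((c,m)::r))) s = fl (dl (sh m r)) s).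
      { simpl. replace (m - m) with 0 by ring. ring. }
      rewrite E in D.
      exact D. }
    assert (Hdz : forall s, fl (dl (sh m r)) s = 0).
    { refine (IH (dl (sh m r)) _ u v Huv _).
      - unfold dl, sh. rewrite !length_map. lia.
      - intros s Hs. apply (deriv_zero_loc g u v s); auto. }
    assert (Hgz : g t = 0).
    { rewrite (const_of_deriv0 g _ Hgd Hdz ((u+v)/2) t). apply Hg0; lra. }
    rewrite (fl_sh m). fold g. rewrite Hgz. ring.
Qed.
Definition Ssum (x : list R) (t : R) := fold_right Rplus 0 (map (fun r => rpow (Rabs r) t) x).
Definition enc (x : list R) := map (fun r => (if Rlt_dec 0 (Rabs r) then 1 else 0, ln (Rabs r))) x.
Definition negl (l : list (R*R)) := map (fun p => (- fst p, snd p)) l.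

Lemma Ssum_fl x t : Ssum x t = fl (enc x) t.
Proof.
  induction x as [|r x IH]; simpl; [reflexivity|].
  change (rpow (Rabs r) t + Ssum x t = fl (enc (r :: x)) t). rewrite IH. unfold rpow, Rpower.
  simpl. destruct (Rlt_dec 0 (Rabs r)); simpl; [|ring].
  rewrite Rmult_comm. ring.
Qed.

Lemma fl_app a b t : fl (a ++ b) t = fl a t + fl b t.
Proof. induction a as [|p a IH]; simpl; [ring|]. rewrite IH; ring. Qed.

Lemma fl_neg b t : fl (negl b) t = - fl b t.
Proof. induction b as [|p b IH]; simpl; [ring|]. rewrite IH; ring. Qed.

Lemma rpow_nonneg x t : 0 <= rpow x t.
Proof. unfold rpow, Rpower. destruct (Rlt_dec 0 x); [left; apply exp_pos|lra]. Qed.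

Lemma Ssum_nonneg x t : 0 <= Ssum x t.
Proof.
  induction x as [|r x IH]; [unfold Ssum; simpl; lra|]. change (0 <= rpow (Rabs r) t + Ssum x t).
  pose proof (rpow_nonneg (Rabs r) t). lra.
Qed.

Lemma rpow_inj a b p : 0 <= a -> 0 <= b -> 0 < p -> rpow a p = rpow b p -> a = b.
Proof.
  intros Ha Hb Hp E. unfold rpow, Rpower in E.
  destruct (Rlt_dec 0 a); destruct (Rlt_dec 0 b).
  - apply exp_inv in E. apply ln_inv; auto.
    apply (Rmult_eq_reg_l p); lra.
  - pose proof (exp_pos (p * ln a)); lra.
  - pose proof (exp_pos (p * ln b)); lra.
  - lra.
Qed.

Lemma tnorm_agree x y u v : 0 <= u -> u < v ->
  (forall t, u < t < v -> tnorm x t = tnorm y t) -> forall t, tnorm x t = tnorm y t.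
Proof.
  intros Hu Huv H t.
  assert (HS : forall t, Ssum x t = Ssum y t).
  { intros s.
    assert (Z : fl (enc x ++ negl (enc y)) s = 0).
    { apply (fl_uniq (length (enc x ++ negl (enc y))) _ (le_n _) u v Huv).
      intros s' Hs'. rewrite fl_app, fl_neg, <- !Ssum_fl.
      assert (Ssum x s' = Ssum y s'); [|lra].
      apply (rpow_inj _ _ (/ s')); try apply Ssum_nonneg.
      apply Rinv_0_lt_compat; lra.
      apply H; exact Hs'. }
    rewrite fl_app, fl_neg, <- !Ssum_fl in Z. lra. }
  unfold tnorm. fold (Ssum x t). fold (Ssum y t). rewrite HS. reflexivity.
Qed.

Lemma prop_right (Q D : R -> Prop) t0 t1 e0 :
  t0 <= t1 -> (forall r, t0 <= r <= t1 -> D r) ->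
  0 < e0 -> (forall r, t0 - e0 < r < t0 + e0 -> Q r) ->
  (forall t, D t -> exists e, 0 < e /\ forall u v, t - e <= u -> u < v -> v <= t + e ->
        (forall r, u < r < v -> Q r) -> forall r, t - e < r < t + e -> Q r) ->
  Q t1.
Proof.
  intros H01 HD He0 HQ0 HL.
  set (E := fun s => t0 <= s <= t1 /\ forall r, t0 <= r <= s -> Q r).
  assert (Hb : bound E). { exists t1. intros s [Hs _]. lra. }
  assert (Hne : exists s, E s).
  { exists t0. split; [lra|]. intros r Hr. apply HQ0. lra. }
  destruct (completeness E Hb Hne) as [u [Hub Hlub]].
  assert (Ht0u : t0 <= u). { apply Hub. destruct Hne. split; [lra|]. intros r Hr; apply HQ0; lra. }
  assert (Hut1 : u <= t1). { apply Hlub. intros s [Hs _]. lra. }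
  assert (L : forall r, t0 <= r < u -> Q r).
  { intros r Hr. destruct (classic (Q r)) as [Hq|Hq]; [exact Hq|].
    exfalso. assert (u <= r); [|lra].
    apply Hlub. intros s [Hs Hs2]. destruct (Rle_dec s r) as [|n]; [assumption|].
    exfalso. apply Hq. apply Hs2. lra. }
  assert (Hball : exists e, 0 < e /\ forall r, u - e < r < u + e -> Q r).
  { destruct (Req_dec u t0) as [Eq|Neq].
    - exists e0. split; [lra|]. intros r Hr. apply HQ0. lra.
    - destruct (HL u (HD u (conj Ht0u Hut1))) as [e [He Hu]].
      exists e. split; [lra|].
      apply (Hu (Rmax t0 (u - e)) u).
      + apply Rmax_r.
      + apply Rmax_lub_lt; lra.
      + lra.
      + intros r [Hr1 Hr2]. apply L. split; [|lra].
        left. eapply Rle_lt_trans; [apply Rmax_l|exact Hr1]. }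
  destruct Hball as [e [He Hq]].
  assert (Hs : E (Rmin (u + e/2) t1)).
  { split.
    - split; [apply Rmin_glb; lra|apply Rmin_r].
    - intros r Hr. destruct (Rlt_dec r u).
      + apply L; lra.
      + apply Hq. pose proof (Rmin_l (u + e/2) t1). lra. }
  pose proof (Hub _ Hs) as Hm.
  assert (u = t1).
  { unfold Rmin in Hm. destruct (Rle_dec (u + e/2) t1); lra. }
  subst u. apply Hq. lra.
Qed.

Lemma prop_left (Q D : R -> Prop) t0 t1 e0 :
  t1 <= t0 -> (forall r, t1 <= r <= t0 -> D r) ->
  0 < e0 -> (forall r, t0 - e0 < r < t0 + e0 -> Q r) ->
  (forall t, D t -> exists e, 0 < e /\ forall u v, t - e <= u -> u < v -> v <= t + e ->
        (forall r, u < r < v -> Q r) -> forall r, t - e < r < t + e -> Q r) ->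
  Q t1.
Proof.
  intros H01 HD He0 HQ0 HL.
  replace t1 with (- - t1) by ring.
  apply (prop_right (fun r => Q (- r)) (fun r => D (- r)) (- t0) (- t1) e0).
  - lra.
  - intros r Hr. apply HD. lra.
  - exact He0.
  - intros r Hr. apply HQ0. lra.
  - intros t Ht. destruct (HL (- t) Ht) as [e [He H]]. exists e. split; [exact He|].
    intros u v Hu Huv Hv Hq r Hr.
    apply (H (- v) (- u)); try lra.
    intros r' Hr'. replace r' with (- - r') by ring. apply Hq. lra.
Qed.

Lemma inf_unique S v1 v2 : is_inf S v1 -> is_inf S v2 -> v1 = v2.
Proof.
  intros [H1 H1'] [H2 H2']. apply Rle_antisym; [apply H2'|apply H1']; assumption.
Qed.

Theorem lemma3p3 (G : AbGroup) (phi : G -> R) (alpha : G) (a : R) (b : option R) :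
  is_height G phi -> 0 <= a -> lt_ext a b ->
  (uniform G phi alpha (oint a b) <->
   (forall t, oint a b t ->
      exists (c : R) (d : option R),
        oint c d t /\
        (forall s, oint c d s -> oint a b s) /\
        uniform G phi alpha (oint c d))).
Proof.
  intros _ Ha Hab. split.
  - intros Hu t Ht. exists a, b. split; [exact Ht|]. split; [auto|exact Hu].
  - intros H.
    set (t0 := match b with Some b' => (a + b') / 2 | None => a + 1 end).
    assert (Ht0 : oint a b t0).
    { unfold t0, oint; destruct b as [b'|]; simpl in *; lra. }
    assert (Loc : forall t, oint a b t -> exists e x, 0 < e /\
               (forall r, t - e < r < t + e -> oint a b r) /\
               (forall r, t - e < r < t + e -> phi_t_eq G phi r alpha (tnorm x r))).
    { intros t Ht. destruct (H t Ht) as [c [d [Htcd [Hsub [x Hx]]]]].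
      destruct Htcd as [Hct Htd].
      set (e := match d with Some d' => Rmin (t - c) (d' - t) | None => t - c end).
      assert (He : 0 < e /\ forall r, t - e < r < t + e -> oint c d r).
      { unfold e, oint; destruct d as [d'|]; simpl in *.
        - split. apply Rmin_glb_lt; lra.
          intros r Hr. pose proof (Rmin_l (t - c) (d' - t)).
          pose proof (Rmin_r (t - c) (d' - t)). lra.
        - split. lra. intros r Hr. split; [lra|exact I]. }
      destruct He as [He Hin].
      exists e, x. split; [exact He|]. split.
      - intros r Hr. apply Hsub, Hin, Hr.
      - intros r Hr. apply Hx, Hin, Hr. }
    destruct (Loc t0 Ht0) as [e0 [x0 [He0 [_ Hx0]]]].
    exists x0.
    set (Q := fun r => phi_t_eq G phi r alpha (tnorm x0 r)).
    assert (HL : forall t, oint a b t -> exists e, 0 < e /\ forall u v, t - e <= u -> u < v -> v <= t + e ->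
        (forall r, u < r < v -> Q r) -> forall r, t - e < r < t + e -> Q r).
    { intros t Ht. destruct (Loc t Ht) as [e [x [He [Hin Hx]]]].
      exists e. split; [exact He|]. intros u v Hu Huv Hv Hq r Hr.
      assert (Agree : forall s, tnorm x s = tnorm x0 s).
      { apply (tnorm_agree x x0 ((u + v)/2) v).
        - destruct (Hin ((u+v)/2)) as [Hm _]; lra.
        - lra.
        - intros s Hs. apply (inf_unique (phi_t_vals G phi s alpha)).
          + apply Hx. lra.
          + apply Hq. lra. }
      unfold Q. rewrite <- Agree. apply Hx, Hr. }
    assert (Hconv : forall r s, oint a b r -> oint a b s -> forall q, r <= q <= s -> oint a b q).
    { intros r s [Hr1 Hr2] [Hs1 Hs2] q Hq. split; [lra|].
      destruct b as [b'|]; simpl in *; [lra|exact I]. }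
    intros t Ht. fold (Q t).
    destruct (Rle_dec t0 t) as [Hle|Hle].
    + apply (prop_right Q (oint a b) t0 t e0); auto.
      intros r Hr; apply (Hconv t0 t); auto.
    + apply (prop_left Q (oint a b) t0 t e0); auto; [lra|].
      intros r Hr; apply (Hconv t t0); auto.
Qed.
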